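(* For all integers $L,M\ge 0$, $$\sum_{i,j\in\mathbb Z}(-1)^{i+j}q^{\binom{i+j+1}{2}}\begin{bmatrix}2L+1\\ L-i\end{bmatrix}_q\begin{bmatrix}2M+1\\ M-j\end{bmatrix}_q=-(q;q)_{2L+1}\,\delta_{L,M}.$$
   Context: $q$ is a complex number with $|q|<1$ (or a formal variable). $(a;q)_n=\prod_{j=0}^{n-1}(1-aq^j)$ for $n\ge0$ (empty product $=1$), and $(q;q)_n$ is also written $(q)_n$. The Gaussian binomial is $\begin{bmatrix}n+m\\ n\end{bmatrix}_q=\frac{(q)_{n+m}}{(q)_n(q)_m}$ if $n,m$ are nonnegative integers and $0$ otherwise; hence only finitely many terms of the sum are nonzero. $\binom{x}{2}=x(x-1)/2$. $\delta_{L,M}$ is the Kronecker delta. *)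

(* Defs.v *)
From HB Require Import structures.
From mathcomp Require Import all_boot all_order all_algebra.
Set Implicit Arguments. Unset Strict Implicit. Unset Printing Implicit Defensive.
Import Order.TTheory GRing.Theory Num.Theory.
Local Open Scope ring_scope.

Definition qpoch (R : pzRingType) (a q : R) (n : nat) : R :=
  \prod_(j < n) (1 - a * q ^+ j).

Definition gauss (R : fieldType) (q : R) (N K : int) : R :=
  if (0 <= K) && (K <= N) then
    qpoch q q (absz N) / (qpoch q q (absz K) * qpoch q q (absz (N - K)%R))
  else 0.

(* binom(x,2) = x(x-1)/2 for an integer x; always a natural number. *)
Definition binom2z (x : int) : nat := (absz (x * (x - 1))%R %/ 2)%N.

Definition zsum (R : nmodType) (N : nat) (F : int -> R) : R :=
  \sum_(k < (N.*2).+1) F (k%:Z - N%:Z).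

(* Main.v *)
From Stdlib Require Import Lia.
Require Import Defs.
From HB Require Import structures.
From mathcomp Require Import all_boot all_order all_algebra.
Import Order.TTheory GRing.Theory Num.Theory.
Local Open Scope ring_scope.
Set Implicit Arguments. Unset Strict Implicit.

Ltac nlia := rewrite -?addnn;
  repeat match goal with
  | H : is_true (leq _ _) |- _ => move/ssrnat.leP: H => H
  end;
  try (apply/ssrnat.leP); try match goal with |- is_true (_ == _) => apply/eqP end;
  unfold addn, subn, muln in *; lia.

Lemma test (a b : nat) : (a < b)%N -> (a + 1 <= b * 1)%N.
Proof. move=> h. nlia. Qed.

Lemma b2z_pos (n : nat) : binom2z n%:Z = 'C(n, 2).
Proof.
rewrite /binom2z bin2 -divn2; case: n => [|k]; first by [].
have -> : (k.+1%:Z - 1) = k%:Z by rewrite -addn1 PoszD addrK.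
by rewrite -PoszM absz_nat.
Qed.

Lemma b2z_neg (n : nat) : binom2z (Negz n) = 'C(n.+2, 2).
Proof.
rewrite /binom2z bin2 -divn2 NegzE.
have -> : (- n.+1%:Z - 1) = - (n.+2)%:Z by rewrite -opprD -[(n.+2)]addn1 PoszD.
by rewrite mulrNN -PoszM absz_nat mulnC.
Qed.

Lemma b2zS (x : int) : (binom2z (x + 1))%:Z = (binom2z x)%:Z + x.
Proof.
case: x => [n|n].
  by rewrite -PoszD !b2z_pos addn1 binS bin1 PoszD.
case: n => [|n].
  by [].
have -> : Negz n.+1 + 1 = Negz n.
  by rewrite !NegzE -[n.+2]addn1 PoszD opprD addrNK.
rewrite !b2z_neg NegzE [in RHS]binS bin1 PoszD -addrA subrr addr0 //.
Qed.

Lemma sgn_sub (R : numFieldType) (a : int) (t : nat) :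
  (-1 : R) ^ (a - t%:Z) = (-1) ^ a * (-1) ^+ t.
Proof.
have h : (-1 : R) != 0 by rewrite oppr_eq0 oner_eq0.
by rewrite expfzDr // -exprnN invr_sign.
Qed.

Fixpoint G (R : numFieldType) (q : R) (n k : nat) : R :=
  match n, k with
  | _, 0 => 1
  | 0, _.+1 => 0
  | n'.+1, k'.+1 => G q n' k'.+1 + q ^+ (n' - k') * G q n' k'
  end.

Lemma G_big (R : numFieldType) (q : R) n k : (n < k)%N -> G q n k = 0.
Proof.
elim: n k => [|n IH] [|k] //= hk.
by rewrite !IH ?mulr0 ?addr0 // ltnW.
Qed.

Lemma G_nn (R : numFieldType) (q : R) n : G q n n = 1.
Proof. by elim: n => [|n IH] //=; rewrite G_big // IH subnn expr0 mulr1 add0r. Qed.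

Lemma qpS (R : numFieldType) (q : R) n :
  qpoch q q n.+1 = qpoch q q n * (1 - q ^+ n.+1).
Proof. by rewrite /qpoch big_ord_recr /= exprS. Qed.

Lemma qp0 (R : numFieldType) (q : R) : qpoch q q 0 = 1.
Proof. by rewrite /qpoch big_ord0. Qed.

Lemma ring6 (R : numFieldType) (X Y a b u v Q : R) :
  (X + Q * Y) * (a * u) * (b * v) = (X * (a * u) * b) * v + (Q * u) * (Y * a * (b * v)).
Proof.
rewrite !mulrDl; congr (_ + _); first by rewrite mulrA.
rewrite -!mulrA; congr (_ * _); rewrite [RHS]mulrCA; congr (_ * _).
exact: mulrCA.
Qed.

Lemma G_prod (R : numFieldType) (q : R) n k : (k <= n)%N ->
  G q n k * qpoch q q k * qpoch q q (n - k) = qpoch q q n.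
Proof.
elim: n k => [|n IH] [|k] //= hk.
- by rewrite qp0 !mulr1.
- by rewrite qp0 subn0 !mul1r.
rewrite subSS; have [hkn|hkn] := ltnP k n; last first.
  have -> : k = n by apply/eqP; rewrite eqn_leq hkn -ltnS hk.
  by rewrite G_big // subnn G_nn qp0 expr0 mulr1 add0r mul1r mulr1.
have e1 := IH k.+1 hkn; have e2 := IH k (ltnW hkn).
rewrite [qpoch q q k.+1]qpS -(subnSK hkn) [qpoch q q (n - k.+1).+1]qpS ring6.
rewrite -!qpS (subnSK hkn) e1 e2 qpS [X in _ + X]mulrC -mulrDr; congr (_ * _).
rewrite mulrBr mulr1 addrA subrK -exprD; congr (_ - _ ^+ _). nlia.
Qed.


Lemma qp_neq0 (R : numFieldType) (q : R) (hq : `|q| < 1) n : qpoch q q n != 0.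
Proof.
apply/prodf_neq0 => j _; rewrite subr_eq0; apply/negP => /eqP h.
have := congr1 Num.norm h; rewrite normr1 normrM normrX -exprS => h1.
have : `|q| ^+ j.+1 < 1 by rewrite exprn_ilt1.
by rewrite -h1 ltxx.
Qed.

Lemma gauss_G (R : numFieldType) (q : R) (hq : `|q| < 1) n k : (k <= n)%N ->
  gauss q n%:Z k%:Z = G q n k.
Proof.
move=> hk; rewrite /gauss lez_nat hk /= (subzn hk) absz_nat.
by rewrite -(G_prod q hk) -mulrA mulfK // mulf_neq0 // qp_neq0.
Qed.

Lemma gauss_out (R : numFieldType) (q : R) n K :
  ~~ ((0 <= K) && (K <= n)) -> gauss q n K = 0.
Proof. by rewrite /gauss => /negbTE ->. Qed.

Definition F (R : numFieldType) (q : R) (n : nat) (d : int) : R :=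
  \sum_(k < n.+1) (-1) ^+ k * q ^+ binom2z (d - k%:Z) * G q n k.

Lemma ring4 (R : numFieldType) (s Q E g : R) :
  (- s) * (Q * E) * g = - E * (s * Q * g).
Proof.
rewrite !mulNr; congr (- _); rewrite !mulrA; congr (_ * _).
by rewrite mulrC mulrA.
Qed.

Lemma expo (n i e : nat) (d : int) : (i <= n)%N -> n.+1%:Z = d + e%:Z ->
  (binom2z (d - i.+1%:Z) + (n - i) = binom2z (d - i%:Z) + e)%N.
Proof.
move=> hi h; apply/eqP; rewrite -eqz_nat !PoszD; apply/eqP.
have hx : d - i%:Z = (d - i.+1%:Z) + 1.
  by rewrite -[i.+1]addn1 PoszD opprD addrA subrK.
rewrite hx b2zS -(subzn hi) -addrA; congr (_ + _).
have -> : d = n.+1%:Z - e%:Z by rewrite h addrK.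
by rewrite addrAC subrK subzSS.
Qed.

Lemma F_rec (R : numFieldType) (q : R) (n : nat) (d : int) (e : nat) :
  n.+1%:Z = d + e%:Z -> F q n.+1 d = (1 - q ^+ e) * F q n d.
Proof.
move=> h.
have E1a : \sum_(k < n.+2) (-1) ^+ k * q ^+ binom2z (d - k%:Z) * G q n k = F q n d.
  by rewrite big_ord_recr /= G_big // mulr0 addr0.
rewrite big_ord_recl /= in E1a.
rewrite /F big_ord_recl /=.
under eq_bigr => i _ do rewrite /bump leq0n add1n add0n mulrDr.
rewrite big_split /= addrA.
have E1 : (-1) ^+ 0 * q ^+ binom2z (d - 0%:Z) * G q n 0 +
  \sum_(i < n.+1) (-1) ^+ i.+1 * q ^+ binom2z (d - i.+1%:Z) * G q n i.+1 = F q n d.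
  exact: E1a.
have G0 : G q n 0 = 1 by case: n {h E1a E1}.
rewrite G0 in E1.
rewrite E1 mulrBl mul1r; congr (_ + _).
rewrite /F mulr_sumr -sumrN; apply: eq_bigr => i _.
have ex := expo (ltnSE (ltn_ord i)) h.
rewrite [LHS]mulrA -(mulrA ((-1) ^+ i.+1)) -exprD ex.
by rewrite exprD exprS mulN1r ring4 mulNr.
Qed.

Lemma F_zero (R : numFieldType) (q : R) (n d : nat) : (1 <= d <= n)%N -> F q n d%:Z = 0.
Proof.
move=> /andP[h1 h2].
have base : F q d d%:Z = 0.
  have := @F_rec R q d.-1 d%:Z 0; rewrite prednK // addr0 expr0 subrr mul0r.
  by apply.
have gen : forall t, F q (d + t) d%:Z = 0.
  elim=> [|t IH]; first by rewrite addn0.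
  by rewrite addnS (@F_rec R q (d + t) d%:Z t.+1) ?IH ?mulr0 // -PoszD addnS.
by rewrite -(subnKC h2) gen.
Qed.

Lemma F_0 (R : numFieldType) (q : R) (n : nat) : F q n 0 = qpoch q q n.
Proof.
elim: n => [|n IH].
  by rewrite /F big_ord1 qp0 /= subr0 expr0 !mul1r.
by rewrite (@F_rec R q n 0 n.+1) ?add0r // IH qpS mulrC.
Qed.

Lemma zsum_win (V : nmodType) (N L : nat) (f : int -> V) : (L < N)%N ->
  (forall k : nat, ((k < N - L.+1) || (N + L.+1 <= k))%N -> f (k%:Z - N%:Z) = 0) ->
  zsum N f = \sum_(k < (2 * L + 1)%N.+1) f (L%:Z - k%:Z).
Proof.
move=> hLN hf; rewrite /zsum -(big_mkord xpredT (fun k => f (k%:Z - N%:Z))).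
rewrite (@big_cat_nat _ _ _ (N - L.+1)) //=; last by nlia.
rewrite (@big_cat_nat _ _ _ (N + L.+1) (N - L.+1)) //=; [|nlia|nlia].
rewrite [X in X + _]big1_seq ?add0r; last first.
  by move=> k /andP[_]; rewrite mem_index_iota => /andP[_ hk]; apply: hf; rewrite hk.
rewrite [X in _ + X]big1_seq ?addr0; last first.
  by move=> k /andP[_]; rewrite mem_index_iota => /andP[hk _]; apply: hf; rewrite hk orbT.
rewrite -{1}[(N - L.+1)%N]add0n big_addn.
have -> : (N + L.+1 - (N - L.+1) = (2 * L + 1).+1)%N by nlia.
rewrite big_nat_rev big_mkord; apply: eq_bigr => k _.
have hk := ltn_ord k.
have -> : (0 + (2 * L + 1).+1 - k.+1 + (N - L.+1) = (N + L) - k)%N by nlia.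
rewrite -subzn; last by nlia.
by rewrite PoszD addrAC [N%:Z + _]addrC addrK.
Qed.

Lemma inner_eq (R : numFieldType) (q : R) (hq : `|q| < 1) (L N : nat) (j : int) :
  (L < N)%N ->
  zsum N (fun i => (-1) ^ (i + j) * q ^+ binom2z (i + j + 1)
                   * gauss q (2 * L + 1)%N%:Z (L%:Z - i))
  = (-1) ^ (L%:Z + j) * F q (2 * L + 1)%N (L%:Z + j + 1).
Proof.
move=> hLN; rewrite (zsum_win hLN); last first.
  move=> k hk; rewrite gauss_out ?mulr0 //.
  have -> : L%:Z - (k%:Z - N%:Z) = (L + N)%:Z - k%:Z by rewrite opprB addrA -PoszD.
  case: (leqP k (L + N)) => hk2.
    rewrite subzn // !lez_nat /=; apply/negP => h.
    by case/orP: hk => hk; nlia.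
  by rewrite subr_ge0 lez_nat leqNgt hk2.
rewrite /F mulr_sumr; apply: eq_bigr => k _.
have hk := ltn_ord k.
rewrite subKr (gauss_G hq) //.
rewrite [_ - _ + j]addrAC [_ - _ + 1]addrAC sgn_sub.
by rewrite !mulrA.
Qed.

Lemma gauss_win (R : numFieldType) (q : R) (N L k : nat) :
  ((k < N - L.+1) || (N + L.+1 <= k))%N ->
  gauss q (2 * L + 1)%N%:Z (L%:Z - (k%:Z - N%:Z)) = 0.
Proof.
move=> hk; rewrite gauss_out //.
have -> : L%:Z - (k%:Z - N%:Z) = (L + N)%:Z - k%:Z by rewrite opprB addrA -PoszD.
case: (leqP k (L + N)) => hk2.
  rewrite subzn // !lez_nat /=; apply/negP => h.
  by case/orP: hk => hk; nlia.
by rewrite subr_ge0 lez_nat leqNgt hk2.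
Qed.

Definition T (R : numFieldType) (q : R) (L M : nat) (i j : int) : R :=
  (-1) ^ (i + j) * q ^+ binom2z (i + j + 1)
       * gauss q (2 * L + 1)%N%:Z (L%:Z - i)
       * gauss q (2 * M + 1)%N%:Z (M%:Z - j).

Lemma jfirst (R : numFieldType) (q : R) (hq : `|q| < 1) (L M N : nat) :
  (L < N)%N -> (M < N)%N ->
  zsum N (fun i => zsum N (fun j => T q L M i j)) =
  \sum_(t < (2 * M + 1).+1) (-1) ^ (L%:Z + (M%:Z - t%:Z))
      * F q (2 * L + 1)%N (L%:Z + (M%:Z - t%:Z) + 1) * G q (2 * M + 1)%N t.
Proof.
move=> hL hM.
transitivity (zsum N (fun j => zsum N (fun i => (-1) ^ (i + j) * q ^+ binom2z (i + j + 1)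
       * gauss q (2 * L + 1)%N%:Z (L%:Z - i)) * gauss q (2 * M + 1)%N%:Z (M%:Z - j))).
  rewrite /zsum exchange_big; apply: eq_bigr => b _; rewrite mulr_suml.
  by apply: eq_bigr.
rewrite (zsum_win hM); last by move=> k hk; rewrite gauss_win ?mulr0.
apply: eq_bigr => t _; have ht := ltn_ord t.
by rewrite (inner_eq hq _ hL) subKr (gauss_G hq) //.
Qed.

Lemma zero_case (R : numFieldType) (q : R) (hq : `|q| < 1) (L M N : nat) :
  (L < N)%N -> (M < N)%N -> (M < L)%N ->
  zsum N (fun i => zsum N (fun j => T q L M i j)) = 0.
Proof.
move=> hL hM hML; rewrite (jfirst hq hL hM); apply: big1 => t _.
have ht := ltn_ord t.
have e : (t <= L + M + 1)%N by nlia.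
have -> : L%:Z + (M%:Z - t%:Z) + 1 = (L + M + 1 - t)%N%:Z.
  by rewrite -(subzn e) [in RHS]PoszD [in RHS]PoszD addrA [LHS]addrAC.
have h1 : (1 <= L + M + 1 - t <= 2 * L + 1)%N by apply/andP; split; nlia.
rewrite F_zero; [by rewrite mulr0 mul0r | exact: h1].
Qed.
Lemma eq_case (R : numFieldType) (q : R) (hq : `|q| < 1) (L N : nat) :
  (L < N)%N ->
  zsum N (fun i => zsum N (fun j => T q L L i j)) = - qpoch q q (2 * L + 1)%N.
Proof.
move=> hL; rewrite (jfirst hq hL hL) big_ord_recr.
rewrite big1; last first.
  move=> t _; rewrite [nat_of_ord (widen_ord _ t)]/=.
  have ht := ltn_ord t.
  have e : (t <= L + L + 1)%N by nlia.
  have -> : L%:Z + (L%:Z - t%:Z) + 1 = (L + L + 1 - t)%N%:Z.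
    by rewrite -(subzn e) [in RHS]PoszD [in RHS]PoszD addrA [LHS]addrAC.
  have h1 : (1 <= L + L + 1 - t <= 2 * L + 1)%N by apply/andP; split; nlia.
  rewrite F_zero; [by rewrite mulr0 mul0r | exact: h1].
change (0 + (-1) ^ (L%:Z + (L%:Z - (2 * L + 1)%N%:Z)) * F q (2 * L + 1)%N (L%:Z + (L%:Z - (2 * L + 1)%N%:Z) + 1) * G q (2 * L + 1)%N (2 * L + 1)%N = - qpoch q q (2 * L + 1)%N).
rewrite add0r.
have e2 : (2 * L + 1 = L + L + 1)%N by nlia.
have -> : L%:Z + (L%:Z - (2 * L + 1)%N%:Z) + 1 = 0.
  rewrite addrA [LHS]addrAC. rewrite (_ : L%:Z + L%:Z + 1 = (L + L + 1)%N%:Z).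
    by rewrite -e2 subrr.
  by rewrite !PoszD.
rewrite F_0 G_nn mulr1 addrA sgn_sub -PoszD.
change ((-1) ^ (L + L)%N%:Z) with ((-1 : R) ^+ (L + L)).
rewrite -exprD -signr_odd !oddD.
by case: (odd L); rewrite /= expr1 mulN1r.
Qed.

Lemma Tsym (R : numFieldType) (q : R) L M x y : T q L M x y = T q M L y x.
Proof. by rewrite /T (addrC x y) mulrAC. Qed.

Lemma swapT (R : numFieldType) (q : R) L M N :
  zsum N (fun i => zsum N (fun j => T q L M i j)) =
  zsum N (fun i => zsum N (fun j => T q M L i j)).
Proof.
rewrite /zsum exchange_big; apply: eq_bigr => a _; apply: eq_bigr => b _.
exact: Tsym.
Qed.

Unset Implicit Arguments.

Theorem mainTheorem1 (R : numFieldType) (q : R) (hq : `|q| < 1) (L M : nat)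
    (N : nat) (hL : (L < N)%N) (hM : (M < N)%N) :
  zsum N (fun i => zsum N (fun j =>
     (-1) ^ (i + j) * q ^+ binom2z (i + j + 1)
       * gauss q (2 * L + 1)%N%:Z (L%:Z - i)
       * gauss q (2 * M + 1)%N%:Z (M%:Z - j)))
  = - qpoch q q (2 * L + 1) * (L == M)%:R.
Proof.
change (zsum N (fun i => zsum N (fun j => T q L M i j))
  = - qpoch q q (2 * L + 1)%N * (L == M)%:R).
case: eqP => [<-|hne].
  by rewrite mulr1 (eq_case hq hL).
rewrite mulr0.
case: (ltngtP L M) => hLM.
- by rewrite swapT (zero_case hq hM hL hLM).
- by rewrite (zero_case hq hL hM hLM).
- by case: hne.
Qed.
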